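(* Suppose $a\in C^2(\mathbb{R})$. Let $\tilde\alpha=(\tilde\alpha_1,\tilde\alpha_2)\in\mathbb{R}^2$ be such that $a'(\tilde\alpha_2)>0$. Given $s_0,t_0>0$ sufficiently small depending on the function $a$ and $\tilde\alpha_2$, there exists $0<\epsilon_0<1$ depending on the function $a$, $\tilde\alpha_2$, $s_0$ and $t_0$ such that, for all $\epsilon\leq \epsilon_0$, there exists a collection of weights $\{[\gamma^{\epsilon}]_j\}_{j=0}^4 \subset \mathbb{R}_{+}$ with $\sum_{j=1}^{4}[\gamma^{\epsilon}]_j=\epsilon$ and $[\gamma^{\epsilon}]_0=1-\epsilon$ such that \begin{equation*} \mu^{\epsilon}:=\sum_{j=0}^{4} [\gamma^{\epsilon}]_j\delta_{\zeta_j} \in \mathcal{M}^{pc}(\mathcal{K}^{\tilde\alpha}_1). \end{equation*}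
   Context: Let $a:\mathbb{R}\to\mathbb{R}$ and let $F(\xi)=\int_0^\xi a(s)\,ds$. For $\alpha\in\mathbb{R}^2$ define $$P_1^{\alpha}(u,v):=\begin{pmatrix} u-\alpha_1 & v-\alpha_2 \\ a(v)-a(\alpha_2) & u-\alpha_1\\ (u-\alpha_1)(a(v)-a(\alpha_2)) & \frac{(u-\alpha_1)^2}{2}+F(v)-F(\alpha_2)-a(\alpha_2)(v-\alpha_2) \end{pmatrix}$$ and $\mathcal{K}^{\alpha}_1:=\{P_1^{\alpha}(u,v):u,v\in\mathbb{R}\}\subset M^{3\times 2}$. For a set $\mathcal{K}$ of matrices, $\mathcal{M}^{pc}(\mathcal{K})$ denotes the set of probability measures $\mu$ supported on $\mathcal{K}$ such that $\int M(X)\,d\mu(X)=M\left(\int X\,d\mu(X)\right)$ for every minor $M$ (Null Lagrangian measures). Given $s_0,t_0>0$, set $\zeta_0:=P_1^{\tilde\alpha}(\tilde\alpha_1,\tilde\alpha_2)=0$, $\zeta_1:=P_1^{\tilde\alpha}(\tilde\alpha_1+s_0,\tilde\alpha_2)$, $\zeta_2:=P_1^{\tilde\alpha}(\tilde\alpha_1-s_0,\tilde\alpha_2)$, $\zeta_3:=P_1^{\tilde\alpha}(\tilde\alpha_1,\tilde\alpha_2+t_0)$, $\zeta_4:=P_1^{\tilde\alpha}(\tilde\alpha_1,\tilde\alpha_2-t_0)$. *)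

(* Defs.v *)
From Stdlib Require Import Reals.
From Coquelicot Require Import Coquelicot.
From mathcomp Require Import all_boot all_order all_algebra.
From mathcomp Require Import Rstruct.

Set Implicit Arguments.
Unset Strict Implicit.
Unset Printing Implicit Defensive.

Import GRing.Theory Num.Theory.
Local Open Scope ring_scope.

Definition C2 (a : R -> R) : Prop :=
  (forall x, ex_derive a x) /\
  (forall x, ex_derive (Derive a) x) /\
  (forall x, continuous (Derive (Derive a)) x).

Definition Fprim (a : R -> R) (xi : R) : R := RInt a 0%R xi.

Definition P1 (a : R -> R) (al1 al2 : R) (u v : R) : 'M[R]_(3, 2) :=
  \matrix_(i < 3, j < 2)
    match nat_of_ord i, nat_of_ord j with
    | 0%N, 0%N => u - al1
    | 0%N, _   => v - al2
    | 1%N, 0%N => a v - a al2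
    | 1%N, _   => u - al1
    | _,   0%N => (u - al1) * (a v - a al2)
    | _,   _   => (u - al1) ^+ 2 / 2 + Fprim a v - Fprim a al2
                   - a al2 * (v - al2)
    end.

Definition K1 (a : R -> R) (al1 al2 : R) (X : 'M[R]_(3, 2)) : Prop :=
  exists u v, X = P1 a al1 al2 u v.

Definition minor (k : nat) (f : 'I_k -> 'I_3) (g : 'I_k -> 'I_2)
  (X : 'M[R]_(3, 2)) : R := \det (mxsub f g X).

Definition incr_idx (k m : nat) (f : 'I_k -> 'I_m) : Prop :=
  forall i j : 'I_k, (i < j)%N -> (f i < f j)%N.

(* The discrete measure  mu = sum_{j<n} gamma_j delta_{zeta_j}  belongs to
   M^pc(K): it is a probability measure (nonnegative weights summing to 1)
   supported on K, and int M dmu = M(int X dmu) for every minor M. *)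
Definition pc_discrete (K : 'M[R]_(3, 2) -> Prop) (n : nat)
  (gamma : 'I_n -> R) (zeta : 'I_n -> 'M[R]_(3, 2)) : Prop :=
  (forall j, 0 <= gamma j) /\
  \sum_(j < n) gamma j = 1 /\
  (forall j, 0 < gamma j -> K (zeta j)) /\
  (forall (k : nat) (f : 'I_k -> 'I_3) (g : 'I_k -> 'I_2),
      (1 <= k <= 2)%N -> incr_idx f -> incr_idx g ->
      \sum_(j < n) gamma j * minor f g (zeta j)
      = minor f g (\sum_(j < n) gamma j *: zeta j)).

Definition zetas (a : R -> R) (al1 al2 s0 t0 : R) (j : 'I_5) : 'M[R]_(3, 2) :=
  match nat_of_ord j with
  | 0%N => P1 a al1 al2 al1 al2
  | 1%N => P1 a al1 al2 (al1 + s0) al2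
  | 2%N => P1 a al1 al2 (al1 - s0) al2
  | 3%N => P1 a al1 al2 al1 (al2 + t0)
  | _   => P1 a al1 al2 al1 (al2 - t0)
  end.

(* Main.v *)
Require Import Defs.
From Stdlib Require Import Reals Lra Psatz.
From Coquelicot Require Import Coquelicot.

Section RealPart.
Local Open Scope R_scope.

Lemma abs_prod_le x y K L : Rabs x <= K -> Rabs y <= L -> Rabs (x*y) <= K*L.
Proof. intros; rewrite Rabs_mult; apply Rmult_le_compat; auto using Rabs_pos. Qed.

Lemma le_div_mul x a b : 0 < b -> x <= a/b -> x*b <= a.
Proof. intros Hb H. apply (Rmult_le_compat_r b) in H; [|lra]. replace (a/b*b) with a in H by (field; lra). exact H. Qed.

Lemma solve_sys (c1 c2 g1 g2 s t : R) : 0<c1 -> 0<c2 -> 0<g1 -> 0<g2 -> 0<s -> 0<t ->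
 exists eps0, 0<eps0<1 /\ forall eps, 0<eps<=eps0 -> exists m p q, 0<m /\ 0<p /\ 0<q /\
 m+p+q = eps /\
 m*s^2 - t*p*c1 - t*q*c2 = -t*(p-q)*(p*c1 - q*c2) /\
 p*c1*g1 - q*c2*g2 = (p*c1 - q*c2)*(m*s^2/2 + p*g1 + q*g2).
Proof.
intros Hc1 Hc2 Hg1 Hg2 Hs Ht.
set (lz := c1*g1/(c2*g2)).
assert (Hl0 : 0 < lz) by (unfold lz; apply Rdiv_lt_0_compat; nra).
set (lh := 2*lz). set (ll := lz/2).
set (K1 := 1 + lh). set (K2 := c1 + lh*c2).
set (K3 := K2*(s^2/2 + 2*(g1+lh*g2))).
assert (HK1 : 0 < K1) by (unfold K1, lh; lra).
assert (HK2 : 0 < K2) by (unfold K2, lh; nra).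
assert (HK3 : 0 < K3) by (unfold K3; apply Rmult_lt_0_compat; [lra|]; unfold lh; nra).
set (e1 := s^2/(8*t*K1*K2)).
set (e2 := c1/(4*K1*K2)).
set (e3 := c1*g1/(4*K3)).
assert (He1 : 0 < e1) by (unfold e1; apply Rdiv_lt_0_compat; [nra|]; repeat apply Rmult_lt_0_compat; lra).
assert (He2 : 0 < e2) by (unfold e2; apply Rdiv_lt_0_compat; [nra|]; repeat apply Rmult_lt_0_compat; lra).
assert (He3 : 0 < e3) by (unfold e3; apply Rdiv_lt_0_compat; nra).
exists (Rmin (1/2) (Rmin e1 (Rmin e2 e3))).
split.
{ split. repeat apply Rmin_glb_lt; lra. 
  eapply Rle_lt_trans. apply Rmin_l. lra. }
intros eps [Heps Hle].
assert (E1 : eps <= e1) by (eapply Rle_trans; [apply Hle|]; eapply Rle_trans; [apply Rmin_r|apply Rmin_l]).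
assert (E2 : eps <= e2) by (eapply Rle_trans; [apply Hle|]; eapply Rle_trans; [apply Rmin_r|]; eapply Rle_trans; [apply Rmin_r|apply Rmin_l]).
assert (E3 : eps <= e3) by (eapply Rle_trans; [apply Hle|]; eapply Rle_trans; [apply Rmin_r|]; eapply Rle_trans; [apply Rmin_r|apply Rmin_r]).
assert (E1' : eps*(8*t*K1*K2) <= s^2) by (apply le_div_mul; [|exact E1]; repeat apply Rmult_lt_0_compat; lra).
assert (E2' : eps*(4*K1*K2) <= c1) by (apply le_div_mul; [|exact E2]; repeat apply Rmult_lt_0_compat; lra).
assert (E3' : eps*(4*K3) <= c1*g1) by (apply le_div_mul; [|exact E3]; lra).
pose (al := fun l => eps*t*((1-l)*(c1 - l*c2))).
pose (be := fun l => s^2*(1+l) + t*(c1+l*c2)).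
pose (disc := fun l => be l ^2 - 4*al l*s^2).
pose (P := fun l => 2*s^2/(be l + sqrt (disc l))).
pose (M := fun l => 1 - P l*(1+l)).
pose (h := fun l => c1*g1 - l*c2*g2 - eps*(c1 - l*c2)*(M l*s^2/2 + P l*(g1+l*g2))).
assert (Hll : 0 < ll) by (unfold ll; lra).
assert (Hlh : ll < lh) by (unfold ll, lh; lra).
assert (Hfacts : forall l, ll <= l <= lh -> 0 < disc l /\ 0 < be l + sqrt (disc l) /\ 0 < P l /\ P l <= 2 /\
   al l * P l^2 - be l * P l + s^2 = 0 /\ 0 < M l /\ M l <= 1 /\
   Rabs (h l - (c1*g1 - l*c2*g2)) <= c1*g1/4).
{ intros l Hl.
  assert (A1 : Rabs (1-l) <= K1) by (apply Rabs_le; unfold K1; lra).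
  assert (A2 : Rabs (c1-l*c2) <= K2) by (apply Rabs_le; unfold K2; nra).
  assert (A3 : Rabs (al l) <= eps*t*(K1*K2)).
  { unfold al. rewrite Rabs_mult, (Rabs_pos_eq (eps*t)) by nra.
    apply Rmult_le_compat_l; [nra|]. apply abs_prod_le; auto. }
  assert (Hlpos : 0 < l) by lra.
  assert (Hbe : s^2 <= be l).
  { unfold be. assert (0 <= s^2*l) by (apply Rmult_le_pos; nra).
    assert (0 <= t*(c1+l*c2)) by (apply Rmult_le_pos; nra). lra. }
  assert (A4 : al l <= eps*t*(K1*K2)) by (eapply Rle_trans; [apply Rle_abs|exact A3]).
  assert (Hdisc : 0 < disc l).
  { unfold disc. assert (s^2*s^2 <= be l^2) by (simpl; apply Rmult_le_compat; nra).
    assert (4*al l*s^2 <= 4*(eps*t*(K1*K2))*s^2) by (apply Rmult_le_compat_r; nra).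
    assert (4*(eps*t*(K1*K2))*s^2 = (eps*(8*t*K1*K2))*s^2/2) by field.
    assert ((eps*(8*t*K1*K2))*s^2 <= s^2*s^2) by (apply Rmult_le_compat_r; nra).
    assert (0 < s^2*s^2) by (apply Rmult_lt_0_compat; nra).
    lra. }
  assert (Hr := sqrt_lt_R0 _ Hdisc).
  assert (Hrr := sqrt_sqrt _ (Rlt_le _ _ Hdisc)).
  set (r := sqrt (disc l)) in *.
  assert (Hden : s^2 <= be l + r) by lra.
  assert (Hs2 : 0 < s^2) by nra.
  assert (HP : 0 < P l) by (unfold P; fold r; apply Rdiv_lt_0_compat; lra).
  assert (HP2 : P l <= 2).
  { unfold P; fold r. apply (Rmult_le_reg_r (be l + r)); [lra|].
    unfold Rdiv. rewrite Rmult_assoc, Rinv_l by lra. lra. }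
  assert (Hid : al l * P l^2 - be l * P l + s^2 = 0).
  { unfold P; fold r.
    assert (E : al l * (2 * s ^ 2 / (be l + r)) ^ 2 - be l * (2 * s ^ 2 / (be l + r)) + s ^ 2
             = s^2*(4*al l*s^2 - be l^2 + r*r)/((be l+r)^2)) by (field; lra).
    rewrite E, Hrr. unfold disc. field. lra. }
  assert (HM : s^2 * M l = P l * (t*(c1+l*c2) - al l * P l)).
  { unfold M. unfold be in Hid. nra. }
  assert (HaP : al l * P l <= eps*t*(K1*K2)*2).
  { apply Rle_trans with (Rabs (al l) * P l). apply Rmult_le_compat_r; [lra|apply Rle_abs].
    apply Rmult_le_compat; auto using Rabs_pos; lra. }
  assert (HaP2 : eps*t*(K1*K2)*2 <= t*c1/2).
  { assert (t*(eps*(4*K1*K2)) <= t*c1) by (apply Rmult_le_compat_l; lra). lra. }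
  assert (Htc : t*c1 <= t*(c1+l*c2)) by (apply Rmult_le_compat_l; nra).
  assert (HMp : 0 < M l).
  { assert (0 < s^2 * M l) by (rewrite HM; apply Rmult_lt_0_compat; nra).
    nra. }
  assert (HM1 : M l <= 1) by (unfold M; nra).
  split; [assumption|]. split; [lra|]. do 5 (split; [assumption|]).
  unfold h.
  replace (c1 * g1 - l * c2 * g2 - eps * (c1 - l * c2) * (M l * s ^ 2 / 2 + P l * (g1 + l * g2)) -
    (c1 * g1 - l * c2 * g2)) with (-(eps * ((c1 - l * c2) * (M l * s ^ 2 / 2 + P l * (g1 + l * g2))))) by ring.
  rewrite Rabs_Ropp, Rabs_mult, (Rabs_pos_eq eps) by lra.
  apply Rle_trans with (eps*K3); [|unfold e3 in *; lra].
  apply Rmult_le_compat_l; [lra|]. unfold K3. apply abs_prod_le; auto.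
  apply Rabs_le. split.
  - assert (0 <= M l * s^2/2) by (apply Rmult_le_pos; [apply Rmult_le_pos|]; lra).
    assert (0 <= g1 + l*g2) by (assert (0 <= l*g2) by (apply Rmult_le_pos; lra); lra).
    assert (0 <= P l * (g1 + l*g2)) by (apply Rmult_le_pos; [apply Rlt_le, HP | exact H0]). assert (0 <= lh*g2) by (apply Rmult_le_pos; lra). lra.
  - assert (M l * s^2/2 <= s^2/2) by (apply Rmult_le_compat_r; [lra|]; nra).
    assert (l*g2 <= lh*g2) by (apply Rmult_le_compat_r; lra).
    assert (0 <= l*g2) by (apply Rmult_le_pos; lra).
    assert (P l * (g1 + l*g2) <= 2*(g1+lh*g2)) by (apply Rmult_le_compat; lra). lra. }
assert (Hlz : lz*(c2*g2) = c1*g1) by (unfold lz; field; lra).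
assert (Hcg : 0 < c1*g1) by (apply Rmult_lt_0_compat; lra).
assert (C1 : forall a, ll <= a <= lh -> continuity_pt (fun l => - h l) a).
{ intros xq Hxq. destruct (Hfacts xq Hxq) as [D1 [D2 _]].
  apply continuity_pt_filterlim. apply (ex_derive_continuous (fun l => - h l)).
  unfold h, M, P, disc, be, al in *. auto_derive.
  match goal with |- context [sqrt ?X] => assert (EX : X = (s ^ 2 * (1 + xq) + t * (c1 + xq * c2)) ^ 2 -
    4 * (eps * t * ((1 - xq) * (c1 - xq * c2))) * s ^ 2) by ring; rewrite EX end.
  repeat split; try lra. }
assert (C2 : - h ll < 0).
{ destruct (Hfacts ll (conj (Rle_refl _) (Rlt_le _ _ Hlh))) as [_ [_ [_ [_ [_ [_ [_ Hb]]]]]]].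
  destruct (proj1 (Rabs_le_between _ _) Hb) as [Hb1 Hb2]. unfold ll in *. 
  assert (lz / 2 * c2 * g2 = c1*g1/2) by (rewrite <- Hlz; field). lra. }
assert (C3 : 0 < - h lh).
{ destruct (Hfacts lh (conj (Rlt_le _ _ Hlh) (Rle_refl _))) as [_ [_ [_ [_ [_ [_ [_ Hb]]]]]]].
  destruct (proj1 (Rabs_le_between _ _) Hb) as [Hb1 Hb2]. unfold lh in *. 
  assert (2 * lz * c2 * g2 = 2*(c1*g1)) by (rewrite <- Hlz; ring). lra.
}
destruct (Ranalysis5.IVT_interv (fun l => - h l) ll lh C1 Hlh C2 C3) as [z [Hz Hhz]].
destruct (Hfacts z Hz) as [_ [_ [HP [_ [Hid [HM _]]]]]].
  exists (eps * M z), (eps * P z), (eps * (z * P z)).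
  assert (0 < z) by lra.
  split; [apply Rmult_lt_0_compat; lra|].
  split; [apply Rmult_lt_0_compat; lra|].
  split; [apply Rmult_lt_0_compat; [lra|apply Rmult_lt_0_compat; lra]|].
  assert (Hh : h z = 0) by lra.
  unfold h, M in Hh. unfold al, be in Hid. unfold M.
  clear C1 C2 C3 Hhz Hfacts. clearbody h M P disc be al.
  split; [ring|].
  split.
  + apply Rminus_diag_uniq.
    transitivity (eps * (eps * t * ((1 - z) * (c1 - z * c2)) * P z ^ 2 - (s ^ 2 * (1 + z) + t * (c1 + z * c2)) * P z + s ^ 2)).
    ring. rewrite Hid. ring.
  + apply Rminus_diag_uniq.
    transitivity (eps * P z * (c1 * g1 - z * c2 * g2 - eps * (c1 - z * c2) * ((1 - P z * (1 + z)) * s ^ 2 / 2 + P z * (g1 + z * g2)))).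
    field. rewrite Hh. ring.
Qed.


Lemma a_facts (a : R -> R) (al2 : R) :
  (forall x, ex_derive a x) -> 0 < Derive a al2 ->
  exists delta, 0 < delta /\ forall t, 0 < t < delta ->
   0 < a (al2+t) - a al2 /\ 0 < a al2 - a (al2 - t) /\
   0 < RInt a 0 (al2+t) - RInt a 0 al2 - a al2 * t /\
   0 < RInt a 0 (al2-t) - RInt a 0 al2 + a al2 * t.
Proof.
intros Hd Hpos.
assert (Hc : forall x, continuous a x) by (intro x; apply (ex_derive_continuous (V:=R_NormedModule)), Hd).
assert (Hi : forall u v, ex_RInt a u v) by (intros; apply (ex_RInt_continuous (V:=R_CompleteNormedModule)); intros; apply Hc).
assert (HD := Derive_correct a al2 (Hd al2)).
apply is_derive_Reals in HD.
destruct (HD _ Hpos) as [dl Hdl].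
assert (Key : forall h, h <> 0 -> Rabs h < dl -> 0 < (a (al2 + h) - a al2)/h).
{ intros h Hh Hh2. specialize (Hdl h Hh Hh2). apply Rabs_lt_between in Hdl. lra. }
assert (Kp : forall x, al2 < x < al2 + dl -> a al2 < a x).
{ intros x Hx. assert (H := Key (x - al2) ltac:(lra) ltac:(rewrite Rabs_pos_eq; lra)).
  replace (al2 + (x - al2)) with x in H by ring.
  apply Rdiv_pos_cases in H. lra. }
assert (Km : forall x, al2 - dl < x < al2 -> a x < a al2).
{ intros x Hx. assert (H := Key (x - al2) ltac:(lra) ltac:(rewrite Rabs_left; lra)).
  replace (al2 + (x - al2)) with x in H by ring.
  apply Rdiv_pos_cases in H. lra. }
exists dl. split; [apply cond_pos|].
intros t Ht.
split; [specialize (Kp (al2+t)); lra|].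
split; [specialize (Km (al2-t)); lra|].
assert (Ch : forall u v, RInt a 0 v - RInt a 0 u = RInt a u v).
{ intros u v. rewrite <- (RInt_Chasles a 0 u v) by auto. unfold plus; simpl. ring. }
split.
- rewrite Ch.
  assert (RInt (fun _ => a al2) al2 (al2+t) < RInt a al2 (al2+t)).
  { apply RInt_lt; [lra| | |].
    + intros; apply Hc.
    + intros; apply continuous_const.
    + intros x Hx. apply Kp. lra. }
  rewrite RInt_const in H. unfold scal in H; simpl in H. unfold mult in H; simpl in H.
  replace (al2 + t - al2) with t in H by ring. lra.
- rewrite Ch.
  rewrite <- (opp_RInt_swap a) by auto. unfold opp; simpl.
  assert (RInt a (al2-t) al2 < RInt (fun _ => a al2) (al2-t) al2).
  { apply RInt_lt; [lra| | |].
    + intros; apply continuous_const.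
    + intros; apply Hc.
    + intros x Hx. apply Km. lra. }
  rewrite RInt_const in H. unfold scal in H; simpl in H. unfold mult in H; simpl in H.
  replace (al2 - (al2 - t)) with t in H by ring. lra.
Qed.

End RealPart.

From mathcomp Require Import all_boot all_order all_algebra.
From mathcomp Require Import Rstruct.
From mathcomp Require Import ring lra.
Import GRing.Theory Num.Theory.
Local Open Scope ring_scope.

Lemma det2 (R : comNzRingType) (M : 'M[R]_2) : \det M = M 0 0 * M 1 1 - M 0 1 * M 1 0.
Proof. rewrite (expand_det_row _ 0) !big_ord_recl big_ord0 /cofactor !det_mx11 !mxE /=.
have E1 : lift 0 0 = 1 :> 'I_2 by apply/val_inj.
have E2 : lift ord0 ord0 = 1 :> 'I_2 by apply/val_inj.
have E3 : lift ord0 0 = 1 :> 'I_2 by apply/val_inj.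
have E4 : lift (lift ord0 ord0) 0 = 0 :> 'I_2 by apply/val_inj.
rewrite ?E1 ?E2 ?E3 ?E4 /bump /= expr0 expr1. 
have E5 : ord0 = 0 :> 'I_2 by apply/val_inj.
have E6 : lift 1 0 = 0 :> 'I_2 by apply/val_inj.
rewrite ?E5 ?E6. ring.
Qed.

Lemma minor1E (f : 'I_1 -> 'I_3) (g : 'I_1 -> 'I_2) X : minor f g X = X (f 0) (g 0).
Proof. by rewrite /minor det_mx11 mxE. Qed.

Lemma minor2E (f : 'I_2 -> 'I_3) (g : 'I_2 -> 'I_2) X : incr_idx g ->
  minor f g X = X (f 0) 0 * X (f 1) 1 - X (f 0) 1 * X (f 1) 0.
Proof.
move=> Hg.
have G0 : g 0 = 0.
{ apply/val_inj => /=. move: (Hg 0 1 isT). case: (g 0) => [[|[|k]] Hk] //=; case: (g 1) => [[|[|k']] Hk'] //. }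
have G1 : g 1 = 1.
{ apply/val_inj => /=. move: (Hg 0 1 isT). case: (g 1) => [[|[|k]] Hk] //=. }
by rewrite /minor det2 !mxE G0 G1.
Qed.

Theorem theorem8 (a : R -> R) (al1 al2 : R) :
  C2 a -> (Derive a al2 > 0) ->
  exists delta : R, (0 < delta) /\
  forall s0 t0 : R, (0 < s0 < delta) -> (0 < t0 < delta) ->
  exists eps0 : R, (0 < eps0 < 1) /\
  forall eps : R, (0 < eps <= eps0) ->
  exists gamma : 'I_5 -> R,
    (forall j, (0 < gamma j)) /\
    gamma ord0 = (1 - eps) /\
    (\sum_(j < 5 | (0 < j)%N) gamma j) = eps /\
    pc_discrete (K1 a al1 al2) gamma (zetas a al1 al2 s0 t0).
Proof.
move=> [Hd _] /RltP Hpos.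
have [delta [Hdel Hfac]] := a_facts a al2 Hd Hpos.
exists delta; split; first by apply/RltP.
move=> s0 t0 /andP[/RltP Hs0 /RltP Hs0d] /andP[/RltP Ht0 /RltP Ht0d].
have [c1p [c2p [g1p g2p]]] := Hfac t0 (conj Ht0 Ht0d).
have [eps0 [[He0 He1] Hsol]] := solve_sys _ _ _ _ _ _ c1p c2p g1p g2p Hs0 Ht0.
exists eps0; split; first by apply/andP; split; apply/RltP.
move=> eps /andP[/RltP He /RleP Hle].
have [m [p [q [Hm [Hp [Hq [Hsum [HA HC]]]]]]]] := Hsol eps (conj He Hle).
have two : IZR 2 = 2%:R by [].
rewrite ?RminusE ?RplusE ?RmultE ?RoppE ?RpowE ?RdivE ?two ?R0E ?R1E in Hsum.
move: Hm Hp Hq He1 He => /RltP Hm /RltP Hp /RltP Hq /RltP He1 /RltP He.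
move: Hle => /RleP Hle.
rewrite ?R0E ?R1E in Hm Hp Hq He1 He.
pose gamma := fun j : 'I_5 => match nat_of_ord j with 0%N => 1 - eps | 1%N => m/2 | 2%N => m/2 | 3%N => p | _ => q end.
exists gamma.
split.
{ case => [[|[|[|[|[|k]]]]] Hk] //=; rewrite /gamma /=; lra. }
split; first by [].
split.
{ rewrite big_mkcond /= !big_ord_recl big_ord0 /gamma /=. lra. }
split.
{ case => [[|[|[|[|[|k]]]]] Hk] //=; rewrite /gamma /=; lra. }
split.
{ rewrite !big_ord_recl big_ord0 /gamma /=. lra. }
split.
{ case => [[|[|[|[|[|k]]]]] Hk] _ //; rewrite /zetas /=; eexists; eexists; reflexivity. }
move=> [|[|[|k]]] f g //= _ Hf Hg.
- rewrite minor1E summxE. apply eq_bigr => j _. by rewrite minor1E mxE.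
- rewrite [RHS]minor2E // !summxE !big_ord_recl !big_ord0 !minor2E //.
  have Hf01 := Hf 0 1 isT.
  move: (f 0) (f 1) Hf01 => i0 i1 Hi.
  rewrite /gamma /zetas /P1 !mxE /=.
  have eAp : a (al2 + t0) = a (Rplus al2 t0) by [].
  have eAm : a (al2 - t0) = a (Rminus al2 t0) by [].
  have eFp : Fprim a (al2 + t0) = RInt a (IZR Z0) (Rplus al2 t0) by [].
  have eFm : Fprim a (al2 - t0) = RInt a (IZR Z0) (Rminus al2 t0) by [].
  have eF0 : Fprim a al2 = RInt a (IZR Z0) al2 by [].
  rewrite ?eAp ?eAm ?eFp ?eFm ?eF0.
  move: HA HC.
  generalize (a (Rplus al2 t0)) (a (Rminus al2 t0)) (RInt a (IZR Z0) (Rplus al2 t0))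
    (RInt a (IZR Z0) (Rminus al2 t0)) (RInt a (IZR Z0) al2) => Ap Am Fp Fm F0 HA HC.
  rewrite ?RminusE ?RplusE ?RmultE ?RoppE ?RpowE ?RdivE ?two ?R0E ?R1E in HA HC *.

  case: i0 i1 Hi => [[|[|[|?]]] ?] [[|[|[|?]]] ?] //= _.
  + lra.
  + lra.
  + lra.
Qed.
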